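(* Assume Condition 1. Pick any $\pi\in\Pi$ and $t\ge t_1$. If $\bar V_t(\pi)>\theta K$, then \[\Delta_t(\pi)>2\sqrt{\frac{2\,\bar V_t(\pi)\,C_t}{t}}.\]
   Context: Contextual bandit setting: $A$ a set of $K$ actions, $X$ contexts, $\Pi$ a finite set of $N$ policies, $D$ a distribution over $(x,\vec r)\in X\times[0,1]^K$ with marginal $D_X$; $(x_t,\vec r_t)\sim D$ i.i.d., the learner observes $x_t$, picks $a_t$, sees only $r_t:=r_t(a_t)$. $\eta_D(\pi)=\mathbb{E}[r(\pi(x))]$, $\pi^*$ a maximizer. $W_P(x,a)=\sum_{\pi:\pi(x)=a}P(\pi)$. With history $((x_i,a_i,r_i,p_i))_{i\le t}$, $\eta_t(W)=\frac1t\sum_i r_iW(x_i,a_i)/p_i$ for randomized policies $W$, $\pi_t=\arg\max_\pi\eta_t(\pi)$, $\Delta_t(W)=\eta_t(\pi_t)-\eta_t(W)$; $\mathbb{E}_{x\sim h_{t-1}}$ is the average over $x_1,\dots,x_{t-1}$. Actions are chosen by RandomizedUCB$(\Pi,\delta,K)$: $C_t=2\log(Nt/\delta)$, $\mu_t=\min\{\frac1{2K},\sqrt{C_t/(2Kt)}\}$; $P_t$ is a distribution over $\Pi$ whose objective $\sum_\pi P(\pi)\Delta_{t-1}(\pi)$ is within $\epsilon_{\mathrm{opt},t}=O(\sqrt{KC_t/t})$ of the optimum of minimizing it subject to: for all distributions $Q$ over $\Pi$, $\mathbb{E}_{\pi\sim Q}\mathbb{E}_{x\sim h_{t-1}}[1/((1-K\mu_t)W_P(x,\pi(x))+\mu_t)]\le\max\{4K,(t-1)\Delta_{t-1}(W_Q)^2/(180C_{t-1})\}$,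 with each constraint satisfied up to additive slack $K$; $W'_t(a)=(1-K\mu_t)W_{P_t}(x_t,a)+\mu_t$, $a_t\sim W'_t$, $p_t=W'_t(a_t)$. Constants: $\epsilon\in(0,1)$ fixed, $\rho=7500/\epsilon^3$, $\theta=(\rho+1)/(1-(1+\epsilon)/2)$. $t_0$ is the first $t$ with $\mu_t=\sqrt{C_t/(2Kt)}$; $t_1=\lceil16K\log(8KN/\delta)\rceil$. $V_t(\pi)=K$ for $t\le t_0$ and $V_t(\pi)=K+\mathbb{E}_{x\sim D_X}[1/((1-K\mu_t)W_{P_t}(x,\pi(x))+\mu_t)]$ for $t>t_0$; $\bar V_t(\pi)=\max_{\tau\le t}V_\tau(\pi)$. Condition 1: (i) for all $\pi\in\Pi$ and $t\ge t_1$, $\mathbb{E}_{x\sim D_X}[1/((1-K\mu_t)W_{P_t}(x,\pi(x))+\mu_t)]\le(1+\epsilon)\mathbb{E}_{x\sim h_{t-1}}[1/((1-K\mu_t)W_{P_t}(x,\pi(x))+\mu_t)]+\rho K$; and (ii) for all $\pi,\pi'\in\Pi$ and $t\ge t_0$, $|(\eta_t(\pi)-\eta_t(\pi'))-(\eta_D(\pi)-\eta_D(\pi'))|\le2\sqrt{(\bar V_t(\pi)+\bar V_t(\pi'))C_t/t}$. *)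

(* Defs.v *)
From HB Require Import structures.
From mathcomp Require Import all_boot all_order all_algebra.
From mathcomp Require Import all_classical all_reals all_analysis.
Set Implicit Arguments. Unset Strict Implicit. Unset Printing Implicit Defensive.
Import Order.TTheory GRing.Theory Num.Theory.
Local Open Scope ring_scope.

(* Rounds are numbered 1, 2, 3, ...; round-i data are xs i, rs i (full reward
   vector, only rs i (acts i) is observed), acts i, ps i; Pt i = P_i. *)

Section Bandit.
Variables (R : realType) (X : Type) (K : nat) (Pi : finType)
          (pol : Pi -> X -> 'I_K).

Definition WP (P : {ffun Pi -> R}) (x : X) (a : 'I_K) : R :=
  \sum_(p : Pi | pol p x == a) P p.

(* a deterministic policy seen as a randomized policy *)
Definition Wdet (p : Pi) (x : X) (a : 'I_K) : R := (pol p x == a)%:R.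

Definition is_dist (Q : {ffun Pi -> R}) : Prop :=
  (forall p, 0 <= Q p) /\ \sum_(p : Pi) Q p = 1.

Definition eta_hat (xs : nat -> X) (rs : nat -> 'I_K -> R) (acts : nat -> 'I_K)
  (ps : nat -> R) (t : nat) (W : X -> 'I_K -> R) : R :=
  t%:R^-1 * \sum_(1 <= i < t.+1) rs i (acts i) * W (xs i) (acts i) / ps i.

(* Delta_t(W) = eta_t(pi_t) - eta_t(W), with pi_t = pit t an empirical maximizer *)
Definition Delta_hat xs rs acts ps (pit : nat -> Pi) (t : nat) (W : X -> 'I_K -> R) : R :=
  eta_hat xs rs acts ps t (Wdet (pit t)) - eta_hat xs rs acts ps t W.

Definition Eh (xs : nat -> X) (t : nat) (f : X -> R) : R :=
  t%:R^-1 * \sum_(1 <= i < t.+1) f (xs i).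

Definition Ct (delta : R) (t : nat) : R := 2 * ln (#|Pi|%:R * t%:R / delta).

Definition mut (delta : R) (t : nat) : R :=
  Num.min (1 / (2 * K%:R)) (Num.sqrt (Ct delta t / (2 * K%:R * t%:R))).

Definition invW (delta : R) (t : nat) (P : {ffun Pi -> R}) (p : Pi) (x : X) : R :=
  1 / ((1 - K%:R * mut delta t) * WP P x (pol p x) + mut delta t).

(* The constraint of the optimization problem at round t, with additive slack s:
   for all distributions Q,
   E_{pi~Q} E_{x~h_{t-1}}[1/((1-K mu_t)W_P(x,pi(x))+mu_t)]
     <= max{4K, (t-1) Delta_{t-1}(W_Q)^2 / (180 C_{t-1})} + s *)
Definition constraint_ok xs rs acts ps pit (delta : R) (t : nat)
  (s : R) (P : {ffun Pi -> R}) : Prop :=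
  forall Q : {ffun Pi -> R}, is_dist Q ->
    \sum_(p : Pi) Q p * Eh xs t.-1 (invW delta t P p)
      <= Num.max (4 * K%:R)
           ((t.-1)%:R * (Delta_hat xs rs acts ps pit t.-1 (WP Q)) ^+ 2
              / (180 * Ct delta t.-1)) + s.

Definition objective xs rs acts ps pit (t : nat) (P : {ffun Pi -> R}) : R :=
  \sum_(p : Pi) P p * Delta_hat xs rs acts ps pit t.-1 (Wdet p).

Section Population.
Variables (d : measure_display) (Omega : measurableType d)
          (PD : probability Omega R) (xD : Omega -> X) (rD : Omega -> 'I_K -> R).
(* (x, r) ~ D is modelled as (xD w, rD w) with w ~ PD. *)

Definition ED (f : X -> R) : R := \int[PD]_(w in setT) f (xD w).

Definition etaD (p : Pi) : R := \int[PD]_(w in setT) rD w (pol p (xD w)).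

Definition Vt (delta : R) (t0 : nat) (Pt : nat -> {ffun Pi -> R}) (t : nat) (p : Pi) : R :=
  if (t <= t0)%N then K%:R else K%:R + ED (invW delta t (Pt t) p).

Definition Vbar delta t0 Pt (t : nat) (p : Pi) : R :=
  \big[Num.max/Vt delta t0 Pt 1 p]_(1 <= tau < t.+1) Vt delta t0 Pt tau p.

End Population.
End Bandit.

(* Main.v *)
Require Import Defs.
From HB Require Import structures.
From mathcomp Require Import all_boot all_order all_algebra.
From mathcomp Require Import all_classical all_reals all_analysis.
From mathcomp Require Import ring lra zify.
Import Order.TTheory GRing.Theory Num.Theory.
Local Open Scope ring_scope.



Lemma ln_ge_half (R : realType) (y : R) : 2 <= y -> 1/2 <= ln y.
Proof.
move=> y2.
have y0 : 0 < y by apply: lt_le_trans y2.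
have h := @le_ln1Dx R (y^-1 - 1).
have : -1 < y^-1 - 1 by rewrite ltrBrDr addNr invr_gt0.
move/h; rewrite addrCA subrr addr0 lnV ?posrE // => h2.
have : y^-1 <= 1/2 by rewrite -[1/2]invf_div divr1 lef_pV2 ?posrE //.
lra.
Qed.

Lemma ln_ge1 (R : realType) (y : R) : 4 <= y -> 1 <= ln y.
Proof.
move=> y4.
have : ln 4 <= ln y by rewrite ler_ln ?posrE //; lra.
have -> : (4 : R) = 2 * 2 by lra.
rewrite lnM ?posrE //.
have := @ln_ge_half R 2 (lexx _); lra.
Qed.

Lemma sqr_le (R : realType) (a b : R) : 0 <= b -> a ^+ 2 <= b ^+ 2 -> a <= b.
Proof.
move=> b0 h; have [a0|a0] := leP 0 a; last by apply: le_trans b0; apply: ltW.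
by rewrite -(ler_pXn2r (n:=2)) ?nnegrE.
Qed.

Lemma Cmono (R : realType) (N d : R) (s : nat) : 1 <= N -> 0 < d <= 1 -> (4 <= s)%N ->
  2 * ln (N * s.+1%:R / d) / s.+1%:R <= 2 * ln (N * s%:R / d) / s%:R.
Proof.
move=> N1 /andP[d0 d1] s4.
have s0 : 0 < s%:R :> R by rewrite ltr0n; case: s s4.
have s4' : 4 <= s%:R :> R by rewrite (ler_nat R 4 s).
set u := N * s%:R / d.
have u4 : 4 <= u.
  rewrite /u ler_pdivlMr //; apply: (le_trans (y := s%:R)); first by nra.
  nra.
have u0 : 0 < u by lra.
have -> : N * s.+1%:R / d = u * (1 + s%:R^-1).
  rewrite /u -natr1; field.
  by apply/andP; split; apply/lt0r_neq0.
rewrite lnM ?posrE //.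
have h1 : ln (1 + s%:R^-1 : R) <= s%:R^-1.
  apply: (@le_ln1Dx R); apply: (lt_le_trans (y:=0)); first by rewrite ltrN10.
  by rewrite invr_ge0 ltW.
have L1 := @ln_ge1 R u u4.
set L := ln u in L1 *; set l := ln (1 + s%:R^-1) in h1 *.
have s1 : 0 < s.+1%:R :> R by rewrite ltr0n.
apply: (le_trans (y := 2 * (L + s%:R^-1) / s.+1%:R)).
  by rewrite ler_pM2r ?invr_gt0 // ler_pM2l // lerD2l.
rewrite -subr_ge0.
have -> : 2 * L / s%:R - 2 * (L + s%:R^-1) / s.+1%:R = 2 * (L - 1) / (s%:R * s.+1%:R).
  rewrite -natr1; field; by apply/andP; split; apply/lt0r_neq0; rewrite // -?natr1 //.
apply: divr_ge0; first by apply: mulr_ge0; lra.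
by apply: mulr_ge0; apply: ltW.
Qed.


Lemma mu_bound (R : realType) (K : nat) (N d th : R) (s : nat) :
  (0 < K)%N -> 1 <= N -> 0 < d < 1 -> 100 <= th -> (2 <= s)%N ->
  ~ (Num.ceil (16 * K%:R * ln (8 * K%:R * N / d)) <= s%:Z) ->
  1 / Num.min (1 / (2 * K%:R)) (Num.sqrt (2 * ln (N * s%:R / d) / (2 * K%:R * s%:R)))
    <= (th - 1) * K%:R.
Proof.
move=> K0 N1 /andP[d0 d1] th100 s2 hT.
have k1 : 1 <= K%:R :> R by rewrite (ler_nat R 1 K).
have s2' : 2 <= s%:R :> R by rewrite (ler_nat R 2 s).
set k := K%:R in k1 *.
have hx : s%:R < 16 * k * ln (8 * k * N / d).
  rewrite ltNge; apply/negP => h; apply: hT; rewrite ceil_le_int.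
  by rewrite -pmulrn.
have q1 : N * s%:R / d >= 2.
  rewrite ler_pdivlMr //; nra.
have c_half := @ln_ge_half R _ q1.
set c := ln (N * s%:R / d) in c_half *.
have key : s%:R <= 17 * k * c.
  have [h|h] := leP (8 * k) s%:R.
    have L0 : 0 <= ln (8 * k * N / d).
      apply: ln_ge0; rewrite ler_pdivlMr //; nra.
    have Lc : ln (8 * k * N / d) <= c.
      rewrite /c ler_ln ?posrE; first by rewrite ler_pM2r ?invr_gt0 //; nra.
        by rewrite divr_gt0 //; nra.
      by rewrite divr_gt0 //; nra.
    nra.
  nra.
have B0 : 0 < Num.sqrt (2 * c / (2 * k * s%:R)).
  by rewrite sqrtr_gt0 divr_gt0 //; nra.
have [h|h] := leP (1 / (2 * k)) (Num.sqrt (2 * c / (2 * k * s%:R))).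
  rewrite div1r invf_div divr1; nra.

rewrite ler_pdivrMr //.
set B := Num.sqrt _ in B0 h *.
have B2 : B ^+ 2 = 2 * c / (2 * k * s%:R) by rewrite sqr_sqrtr // divr_ge0 //; nra.
apply: sqr_le; first by apply: mulr_ge0; [nra | exact: ltW].
rewrite expr1n exprMn B2.
have -> : ((th - 1) * k) ^+ 2 * (2 * c / (2 * k * s%:R)) = (th - 1) ^+ 2 * k * c / s%:R.
  field; apply/andP; split; apply/lt0r_neq0; lra.
rewrite ler_pdivlMr; last by lra.
rewrite mul1r.
have : 17 <= (th - 1) ^+ 2 by nra.
have kc : 0 <= k * c by nra.
nra.
Qed.

Lemma bm_ge_seq (R : realType) (r : seq nat) (F : nat -> R) idx j :
  j \in r -> F j <= \big[Num.max/idx]_(i <- r) F i.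
Proof.
elim: r => [//|x r IH]; rewrite inE big_cons => /orP[/eqP->|/IH h].
  by rewrite le_max lexx.
by rewrite le_max h orbT.
Qed.

Lemma bm_mem_seq (R : realType) (r : seq nat) (F : nat -> R) idx :
  \big[Num.max/idx]_(i <- r) F i = idx \/
  exists2 j, j \in r & \big[Num.max/idx]_(i <- r) F i = F j.
Proof.
elim: r => [|x r IH]; first by left; rewrite big_nil.
rewrite big_cons; have [h|h] := leP (F x) (\big[Num.max/idx]_(i <- r) F i).
  case: IH => [->|[j jr ->]]; first by left.
  by right; exists j => //; rewrite inE jr orbT.
by right; exists x => //; rewrite inE eqxx.
Qed.

Lemma bm_ge (R : realType) (F : nat -> R) (s t : nat) :
  (1 <= t <= s)%N -> F t <= \big[Num.max/F 1%N]_(1 <= i < s.+1) F i.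
Proof. by move=> h; apply: bm_ge_seq; rewrite mem_index_iota ltnS. Qed.

Lemma bm_mem (R : realType) (F : nat -> R) (s : nat) :
  exists t, (1 <= t <= maxn 1 s)%N /\ \big[Num.max/F 1%N]_(1 <= i < s.+1) F i = F t.
Proof.
case: (@bm_mem_seq R (index_iota 1 s.+1) F (F 1%N)) => [->|[j]].
  by exists 1%N; rewrite leq_maxl.
rewrite mem_index_iota ltnS => /andP[j1 js] ->; exists j.
by rewrite j1 (leq_trans js) // leq_maxr.
Qed.

Lemma Cmono_n (R : realType) (N d : R) (s1 s2 : nat) : 1 <= N -> 0 < d <= 1 ->
  (4 <= s1 <= s2)%N ->
  2 * ln (N * s2%:R / d) / s2%:R <= 2 * ln (N * s1%:R / d) / s1%:R.
Proof.
move=> N1 hd /andP[s14]; elim: s2 => [|s2 IH].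
  by rewrite leqn0 => /eqP ->.
rewrite leq_eqVlt => /orP[/eqP->//|]; rewrite ltnS => h.
apply: le_trans (IH h); apply: Cmono => //; exact: leq_trans h.
Qed.

Lemma sqr_lt (R : realType) (a b : R) : 0 <= b -> a ^+ 2 < b ^+ 2 -> a < b.
Proof.
move=> b0 h; have [a0|a0] := leP 0 a; last by apply: lt_le_trans b0.
by rewrite -(ltr_pXn2r (n:=2)) ?nnegrE.
Qed.
Lemma Rint_le_bound (R : realType) (d : measure_display) (Omega : measurableType d)
  (PD : probability Omega R) (f : Omega -> R) (M : R) :
  0 <= M -> (forall w, 0 <= f w <= M) -> \int[PD]_w f w <= M.
Proof.
move=> M0 hf.
have f0 : forall w, (0 <= (f w)%:E)%E by move=> w; rewrite lee_fin; case/andP: (hf w).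
have I0 : (0 <= \int[PD]_(w in setT) (f w)%:E)%E by apply: integral_ge0 => w _; exact: f0.
have IM : (\int[PD]_(w in setT) (f w)%:E <= M%:E)%E.
  rewrite ge0_integralTE //.
  apply: ge_ereal_sup => _ [h /= hh <-].
  apply: (le_trans (le_sintegral PD (f:=h) (g:=cst_nnsfun Omega (NngNum M0)) _)).
    move=> x; have := hh x; rewrite lee_fin => /le_trans; apply.
    by case/andP: (hf x).
  have := @sintegral_EFin_cst _ _ _ PD setT (NngNum M0).
  rewrite patch_setT => ->.
  rewrite /= -[X in (_ <= X)%E]mule1; apply: lee_wpmul2l; first by rewrite lee_fin.
  exact: sprobability_setT.
rewrite /Rintegral.
have fin : (\int[PD]_(w in setT) (f w)%:E)%E \is a fin_num by rewrite ge0_fin_numE // (le_lt_trans IM) // ltey.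
by rewrite -lee_fin fineK.
Qed.



Lemma AR1 (R : realType) (K B E Ed rho theta eps D r C : R) :
  1 <= K -> 2 * (rho + 1) <= theta -> 7500 <= rho ->
  theta * (1 - (1 + eps) / 2) = rho + 1 -> 0 < eps < 1 ->
  theta * K < B -> B = K + Ed -> Ed <= (1 + eps) * E + rho * K ->
  E <= Num.max (4 * K) (r * D ^+ 2 / (180 * C)) + K -> 0 < r -> 0 < C ->
  89 * B * (C / r) <= D ^+ 2.
Proof.
move=> K1 th2 rho7 theq /andP[e0 e1] hB hBE hEd hE r0 C0.
have th0 : 0 < theta by lra.
have hBq : (rho + 1) * K < B * (1 - (1 + eps) / 2).
  rewrite -theq -mulrA [_ * K]mulrC mulrA ltr_pM2r //; lra.
have hE2 : B < 2 * E.
  have : B * (1 + eps) / 2 < (1 + eps) * E by nra.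
  move=> h; rewrite -(ltr_pM2l (x := 1 + eps)); last by lra.
  nra.
have Bbig : 15002 * K <= B by nra.
have : E - K <= Num.max (4 * K) (r * D ^+ 2 / (180 * C)) by lra.
rewrite le_max => /orP[h|h]; first by exfalso; nra.
have : 89 * B <= 180 * (r * D ^+ 2 / (180 * C)) by nra.
have -> : 180 * (r * D ^+ 2 / (180 * C)) = r * D ^+ 2 / C.
  by field; apply: lt0r_neq0.
move=> h2.
have -> : 89 * B * (C / r) = (89 * B) * C / r by rewrite mulrA.
rewrite ler_pdivrMr // -(ler_pM2r C0) in h2 *.
have -> : D ^+ 2 * r = r * D ^+ 2 / C * C.
  field; by apply/lt0r_neq0.
done.
Qed.

Lemma AR2 (R : realType) (B y y' D S Dsa : R) :
  0 < B -> 0 < y -> 0 <= y' -> y' <= y -> 0 <= D -> 89 * B * y <= D ^+ 2 ->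
  0 <= S -> S <= 2 * B -> D - 2 * Num.sqrt (S * y) <= Dsa ->
  6 * Num.sqrt (B * y') <= Dsa.
Proof.
move=> B0 y0 y'0 yy D0 hD S0 SB h.
set z := Num.sqrt (B * y).
have z0 : 0 <= z by apply: sqrtr_ge0.
have z2 : z ^+ 2 = B * y by rewrite sqr_sqrtr // mulr_ge0 // ltW.
have h1 : 47 / 5 * z <= D.
  apply: sqr_le => //; rewrite exprMn z2; have -> : (47 / 5 : R) ^+ 2 = 2209 / 25 by rewrite expr2; field.
  nra.
have h2 : 2 * Num.sqrt (S * y) <= 3 * z.
  apply: sqr_le; first by lra.
  rewrite !exprMn z2 sqr_sqrtr; last by rewrite mulr_ge0 // ltW.
  nra.
have h3 : Num.sqrt (B * y') <= z.
  rewrite /z ler_sqrt; last by rewrite mulr_ge0 // ltW.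
  by rewrite ler_pM2l.
lra.
Qed.

Lemma AR3 (R : realType) (V y S : R) :
  0 < V -> 0 < y -> 0 <= S -> S <= 2 * V ->
  6 * Num.sqrt (V * y) <= 2 * Num.sqrt (S * y) -> False.
Proof.
move=> V0 y0 S0 SV h.
have : (6 * Num.sqrt (V * y)) ^+ 2 <= (2 * Num.sqrt (S * y)) ^+ 2.
  by rewrite ler_pXn2r ?nnegrE // mulr_ge0 // sqrtr_ge0.
have Vy : 0 < V * y by apply: mulr_gt0.
have Sy : 0 <= S * y by rewrite mulr_ge0 // ltW.
rewrite !exprMn (@sqr_sqrtr _ _ (ltW Vy)) (@sqr_sqrtr _ _ Sy) !expr2.
nra.
Qed.

Lemma AR4 (R : realType) (V y Dv S x Del : R) :
  0 < V -> 0 < y -> 6 * Num.sqrt (V * y) <= Dv -> 0 <= S -> S <= 2 * V ->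
  Dv - 2 * Num.sqrt (S * y) <= x -> x <= Del ->
  2 * Num.sqrt (2 * V * y) < Del.
Proof.
move=> V0 y0 h S0 SV hx xD.
set w := Num.sqrt (V * y).
have w2 : w ^+ 2 = V * y by rewrite sqr_sqrtr // mulr_ge0 // ltW.
have w0 : 0 < w by rewrite sqrtr_gt0 mulr_gt0.
have h2 : Num.sqrt (S * y) <= Num.sqrt (2 * V * y).
  rewrite ler_sqrt; last by rewrite !mulr_ge0 // ltW.
  by rewrite ler_pM2r.
have h3 : 4 * Num.sqrt (2 * V * y) < 6 * w.
  apply: sqr_lt; first by lra.
  rewrite !exprMn w2 sqr_sqrtr; last by rewrite !mulr_ge0 // ltW.
  have Vy : 0 < V * y by apply: mulr_gt0.
  rewrite !expr2; nra.
rewrite /w in h3; lra.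
Qed.
Arguments AR1 {R K B E Ed rho theta eps D r C}.
Arguments AR2 {R B y y' D S Dsa}.
Arguments AR3 {R V y S}.
Arguments AR4 {R V y Dv S x Del}.

Theorem lemma14
  (R : realType) (X : Type) (K : nat) (Pi : finType) (pol : Pi -> X -> 'I_K)
  (d : measure_display) (Omega : measurableType d) (PD : probability Omega R)
  (xD : Omega -> X) (rD : Omega -> 'I_K -> R)
  (delta eps c : R) (t0 : nat)
  (xs : nat -> X) (rs : nat -> 'I_K -> R) (acts : nat -> 'I_K) (ps : nat -> R)
  (Pt : nat -> {ffun Pi -> R}) (pit : nat -> Pi)
  (* setting *)
  (hK : (0 < K)%N)
  (hpol : injective pol)
  (hdelta : 0 < delta < 1)
  (hrD : forall w a, 0 <= rD w a <= 1)
  (hrs : forall i a, (1 <= i)%N -> 0 <= rs i a <= 1)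
  (* pi_t is an empirical maximizer *)
  (hpit : forall t p, eta_hat xs rs acts ps t (Wdet R pol p)
                        <= eta_hat xs rs acts ps t (Wdet R pol (pit t)))
  (* RandomizedUCB: P_t is a distribution, feasible up to slack K, and
     eps_opt,t-optimal with eps_opt,t <= c sqrt(K C_t / t) *)
  (hPdist : forall t, (1 <= t)%N -> is_dist (Pt t))
  (hPfeas : forall t, (1 <= t)%N ->
     constraint_ok pol xs rs acts ps pit delta t K%:R (Pt t))
  (hPopt : forall t, (1 <= t)%N -> forall P' : {ffun Pi -> R}, is_dist P' ->
     constraint_ok pol xs rs acts ps pit delta t 0 P' ->
     objective pol xs rs acts ps pit t (Pt t)
       <= objective pol xs rs acts ps pit t P'
          + c * Num.sqrt (K%:R * Ct Pi delta t / t%:R))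
  (* p_t = W'_t(a_t) *)
  (hps : forall t, (1 <= t)%N ->
     ps t = (1 - K%:R * mut K Pi delta t) * WP pol (Pt t) (xs t) (acts t)
            + mut K Pi delta t)
  (* t0 is the first t with mu_t = sqrt(C_t/(2Kt)) *)
  (ht0 : (1 <= t0)%N /\
     mut K Pi delta t0 = Num.sqrt (Ct Pi delta t0 / (2 * K%:R * t0%:R)) /\
     forall s, (1 <= s < t0)%N ->
       mut K Pi delta s <> Num.sqrt (Ct Pi delta s / (2 * K%:R * s%:R)))
  (* constants *)
  (heps : 0 < eps < 1)
  (* Condition 1 (i) *)
  (hcond1 : forall p t,
     (Num.ceil (16 * K%:R * ln (8 * K%:R * #|Pi|%:R / delta)) <= t%:Z) ->
     ED PD xD (invW pol delta t (Pt t) p)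
       <= (1 + eps) * Eh xs t.-1 (invW pol delta t (Pt t) p)
          + 7500 / eps ^+ 3 * K%:R)
  (* Condition 1 (ii) *)
  (hcond2 : forall p p' t, (t0 <= t)%N ->
     `|(eta_hat xs rs acts ps t (Wdet R pol p) - eta_hat xs rs acts ps t (Wdet R pol p'))
        - (etaD pol PD xD rD p - etaD pol PD xD rD p')|
       <= 2 * Num.sqrt ((Vbar pol PD xD delta t0 Pt t p + Vbar pol PD xD delta t0 Pt t p')
                        * Ct Pi delta t / t%:R))
  (p : Pi) (t : nat)
  (ht : Num.ceil (16 * K%:R * ln (8 * K%:R * #|Pi|%:R / delta)) <= t%:Z) :
  let rho := 7500 / eps ^+ 3 in
  let theta := (rho + 1) / (1 - (1 + eps) / 2) in
  theta * K%:R < Vbar pol PD xD delta t0 Pt t p ->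
  Delta_hat pol xs rs acts ps pit t (Wdet R pol p)
    > 2 * Num.sqrt (2 * Vbar pol PD xD delta t0 Pt t p * Ct Pi delta t / t%:R).
Proof.
move=> rho theta hV.
have [d0 d1] : 0 < delta /\ delta < 1 by apply/andP.
have [e0 e1] : 0 < eps /\ eps < 1 by apply/andP.
have k1 : 1 <= K%:R :> R by rewrite (ler_nat R 1 K).
have N1 : 1 <= #|Pi|%:R :> R.
  by rewrite (ler_nat R 1); apply/card_gt0P; exists p.
have rho_ge : 7500 <= rho.
  rewrite /rho ler_pdivlMr ?exprn_gt0 //.
  have : eps ^+ 3 <= 1 by rewrite exprn_ile1 // ltW.
  by clear -e0; lra.
have q0 : 0 < 1 - (1 + eps) / 2 by clear -e1; lra.
have th_eq : theta * (1 - (1 + eps) / 2) = rho + 1.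
  by rewrite /theta divfK //; apply/lt0r_neq0.
have th0 : 0 < theta by rewrite /theta divr_gt0 //; clear -rho_ge; lra.
have th_ge : 2 * (rho + 1) <= theta.
  have : 1 - (1 + eps) / 2 <= 1/2 by clear -e0; lra.
  by clear -th0 th_eq rho_ge q0; nra.
have [t01 [_ _]] := ht0.
set T1 := Num.ceil _ in hcond1 ht.
have Cpos : forall s, (1 <= s)%N -> 0 < Ct Pi delta s.
  move=> s s1; rewrite /Ct mulr_gt0 // ln_gt0 // ltr_pdivlMr // mul1r.
  have : 1 <= s%:R :> R by rewrite (ler_nat R 1 s).
  by clear -N1 d1; nra.
have ypos : forall s, (1 <= s)%N -> 0 < Ct Pi delta s / s%:R.
  by move=> s s1; rewrite divr_gt0 ?Cpos // ltr0n.
have T1_8 : forall s, T1 <= s%:Z -> (8 <= s)%N.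
  move=> s; rewrite /T1 ceil_le_int -pmulrn => h.
  have L : 1/2 <= ln (8 * K%:R * #|Pi|%:R / delta).
    by apply: ln_ge_half; rewrite ler_pdivlMr //; clear -k1 N1 d1 d0; nra.
  by rewrite -(ler_nat R); clear -L k1 h; nra.
case: (@arg_maxP _ R Pi p xpredT (fun a => etaD pol PD xD rD a) isT) => pst _ Hpst.
have Hpst' : forall a, etaD pol PD xD rD a <= etaD pol PD xD rD pst.
  by move=> a; exact: (Hpst a isT).
have VK : forall s a, (s <= t0)%N -> Vt pol PD xD delta t0 Pt s a = K%:R.
  by move=> s a h; rewrite /Vt h.
have Vbig : forall s a, theta * K%:R < Vt pol PD xD delta t0 Pt s a ->
    (t0 < s)%N /\ T1 <= s%:Z.
  move=> s a; rewrite /Vt; case: leqP => hs.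
    move=> h; exfalso; move: h; apply/negP; rewrite -leNgt ler_peMl //; clear -th_ge rho_ge; lra.
  have s2 : (2 <= s)%N by apply: leq_ltn_trans hs.
  have s1 : (1 <= s)%N by apply: ltnW.
  move=> h; split => //; apply/negP => /negP hT; move: h; apply/negP; rewrite -leNgt.
  set mu := mut K Pi delta s.
  have mu0 : 0 < mu.
    rewrite /mu /mut lt_min; apply/andP; split; first by rewrite divr_gt0 // mulr_gt0 // ltr0n.
    by rewrite sqrtr_gt0 divr_gt0 ?Cpos // !mulr_gt0 ?ltr0n.
  have muK : mu <= 1 / (2 * K%:R) by rewrite /mu /mut ge_min lexx.
  have Kmu : 0 <= 1 - K%:R * mu.
    have : K%:R * mu <= K%:R * (1 / (2 * K%:R)) by rewrite ler_pM2l // ltr0n.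
    have -> : K%:R * (1 / (2 * K%:R)) = 1/2 :> R by field; rewrite pnatr_eq0 -lt0n.
    by clear; lra.
  have hb := @mu_bound R K #|Pi|%:R delta theta s hK N1 hdelta _ s2 (fun h => (negP hT) h).
  have : 1 / mu <= (theta - 1) * K%:R by apply: hb; clear -th_ge rho_ge; lra.
  move=> hmu.
  have ED1 : ED PD xD (invW pol delta s (Pt s) a) <= 1 / mu.
    apply: Rint_le_bound; first by rewrite divr_ge0 // ltW.
    move=> w; rewrite /invW -/mu.
    have W0 : 0 <= WP pol (Pt s) (xD w) (pol a (xD w)).
      rewrite /WP; apply: sumr_ge0 => q _; have [h0 _] := hPdist s s1; exact: h0.
    have den : mu <= (1 - K%:R * mu) * WP pol (Pt s) (xD w) (pol a (xD w)) + mu.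
      by rewrite lerDr mulr_ge0.
    apply/andP; split; first by rewrite divr_ge0 // (le_trans (ltW mu0) den).
    by rewrite !div1r lef_pV2 ?posrE // (lt_le_trans mu0 den).
  by clear -hmu ED1; lra.
have VbG : forall s tau a, (1 <= tau <= s)%N ->
    Vt pol PD xD delta t0 Pt tau a <= Vbar pol PD xD delta t0 Pt s a.
  by move=> s tau a h; rewrite /Vbar; apply: (@bm_ge R (fun i => Vt pol PD xD delta t0 Pt i a)).
have VbM : forall s a, exists tau, (1 <= tau <= maxn 1 s)%N /\
    Vbar pol PD xD delta t0 Pt s a = Vt pol PD xD delta t0 Pt tau a.
  by move=> s a; rewrite /Vbar; apply: (@bm_mem R (fun i => Vt pol PD xD delta t0 Pt i a)).
have VbMono : forall s1 s2 a, (s1 <= s2)%N ->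
    Vbar pol PD xD delta t0 Pt s1 a <= Vbar pol PD xD delta t0 Pt s2 a.
  move=> s1 s2 a h; case: s2 h => [|s2] h.
    by move: h; rewrite leqn0 => /eqP ->.
  have [tau [/andP[t1' t2] ->]] := VbM s1 a; apply: VbG; rewrite t1' /=.
  by clear -t2 h; lia.
have Vb_big : forall s a, theta * K%:R < Vbar pol PD xD delta t0 Pt s a ->
    exists tau, [/\ (1 <= tau <= s)%N, Vbar pol PD xD delta t0 Pt s a = Vt pol PD xD delta t0 Pt tau a,
                 (t0 < tau)%N & T1 <= tau%:Z].
  move=> s a h; have [tau [/andP[t1' t2] e]] := VbM s a.
  rewrite e in h; have [h1 h2] := Vbig _ _ h.
  exists tau; split => //; rewrite t1' /=.
  by clear -t2 h1 t01; lia.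
have hc2 : forall a b s, (t0 <= s)%N ->
    (eta_hat xs rs acts ps s (Wdet R pol a) - eta_hat xs rs acts ps s (Wdet R pol b))
    - 2 * Num.sqrt ((Vbar pol PD xD delta t0 Pt s a + Vbar pol PD xD delta t0 Pt s b)
                    * (Ct Pi delta s / s%:R))
    <= etaD pol PD xD rD a - etaD pol PD xD rD b.
  move=> a b s hs; have := hcond2 a b s hs; rewrite ler_norml => /andP[_ h].
  rewrite mulrA; move: h; clear; lra.
have ymono : forall s1 s2, (4 <= s1 <= s2)%N ->
    Ct Pi delta s2 / s2%:R <= Ct Pi delta s1 / s1%:R.
  move=> s1 s2 h; rewrite /Ct; apply: Cmono_n => //.
  by rewrite d0 ltW.
have pm : forall s a, (1 <= s)%N ->
    Eh xs s.-1 (invW pol delta s (Pt s) a) <=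
    Num.max (4 * K%:R) (s.-1%:R * (Delta_hat pol xs rs acts ps pit s.-1 (Wdet R pol a)) ^+ 2
                          / (180 * Ct Pi delta s.-1)) + K%:R.
  move=> s a hs.
  pose Q : {ffun Pi -> R} := [ffun q => (q == a)%:R].
  have sQ : forall F : Pi -> R, \sum_q Q q * F q = F a.
    move=> F; rewrite (bigD1 a) //= ffunE eqxx mul1r big1 ?addr0 // => q /negbTE qa.
    by rewrite ffunE qa mul0r.
  have dQ : is_dist Q.
    split; first by move=> q; rewrite ffunE ler0n.
    by have := sQ (fun _ => 1); under eq_bigr do rewrite mulr1.
  have WQ : WP pol Q = Wdet R pol a.
    apply/funext => x; apply/funext => b; rewrite /WP /Wdet.
    rewrite big_mkcond /= (bigD1 a) //= ffunE eqxx big1 ?addr0.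
      by case: (pol a x == b).
    by move=> q /negbTE qa; rewrite ffunE qa; case: ifP.
  have := hPfeas s hs Q dQ; rewrite sQ WQ; exact.
have VbK : forall s a, (1 <= s)%N -> K%:R <= Vbar pol PD xD delta t0 Pt s a.
  move=> s a s1; rewrite -(VK 1%N a t01); apply: VbG; by rewrite s1.
have J : forall s a, theta * K%:R < Vbar pol PD xD delta t0 Pt s a ->
    [/\ (t0 < s)%N, T1 <= s%:Z &
     6 * Num.sqrt (Vbar pol PD xD delta t0 Pt s a * (Ct Pi delta s / s%:R))
       <= etaD pol PD xD rD pst - etaD pol PD xD rD a].
  elim/ltn_ind => s IH a hVa.
  have [tau [/andP[tau1 taus] eVa ht0' hT1]] := Vb_big s a hVa.
  have tau8 := T1_8 _ hT1.
  split.
  - by apply: leq_trans ht0' taus.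
  - by apply: le_trans hT1 _; rewrite lez_nat.
  rewrite eVa.
  set B := Vt pol PD xD delta t0 Pt tau a in eVa *.
  have hB : theta * K%:R < B by rewrite -eVa.
  have thK0 : 0 < theta * K%:R by rewrite mulr_gt0 // ltr0n.
  have B0 : 0 < B by apply: lt_trans hB.
  set r := tau.-1.
  have r7 : (7 <= r)%N by rewrite /r; clear -tau8; lia.
  have rlts : (r < s)%N by rewrite /r; clear -taus tau1; lia.
  have t0r : (t0 <= r)%N by rewrite /r; clear -ht0'; lia.
  have r1 : (1 <= r)%N by apply: leq_trans r7.
  have yr := ypos r r1.
  have Bdef : B = K%:R + ED PD xD (invW pol delta tau (Pt tau) a).
    by rewrite /B /Vt leqNgt ht0'.
  have hc1 := hcond1 a tau hT1.
  have hpm := pm tau a tau1.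
  rewrite -/r in hc1 hpm.
  set Del := Delta_hat pol xs rs acts ps pit r (Wdet R pol a) in hpm.
  have D0 : 0 <= Del by rewrite /Del /Delta_hat subr_ge0 hpit.
  have r0 : 0 < r%:R :> R by rewrite ltr0n.
  have key := AR1 k1 th_ge rho_ge th_eq heps hB Bdef hc1 hpm r0 (Cpos r r1).
  have pstsmall : Vbar pol PD xD delta t0 Pt r pst <= theta * K%:R.
    rewrite leNgt; apply/negP => h; have [_ _ h6] := IH r rlts pst h.
    move: h6; rewrite subrr; apply/negP; rewrite -ltNge.
    rewrite mulr_gt0 // sqrtr_gt0 mulr_gt0 //.
    by apply: lt_le_trans (VbK r pst r1); rewrite ltr0n.
  set sigma := pit r.
  have Vpos : forall u, 0 < Vbar pol PD xD delta t0 Pt r u.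
    by move=> u; apply: lt_le_trans (VbK r u r1); rewrite ltr0n.
  have sigsmall : Vbar pol PD xD delta t0 Pt r sigma <= theta * K%:R.
    rewrite leNgt; apply/negP => h; have [_ _ h6] := IH r rlts sigma h.
    have h7 := hc2 sigma pst r t0r.
    have h8 := hpit r pst; rewrite -/sigma in h8.
    apply: (AR3 (Vpos sigma) yr _ _ (S := Vbar pol PD xD delta t0 Pt r sigma +
                                         Vbar pol PD xD delta t0 Pt r pst)).
    - by apply: addr_ge0; apply: ltW.
    - by move: h pstsmall; clear; lra.
    - by apply: le_trans h6 _; move: h7 h8; clear; lra.
  have h9 := hc2 sigma a r t0r.
  have h10 := Hpst' sigma.
  have Vra : Vbar pol PD xD delta t0 Pt r a <= B.
    by rewrite -eVa; apply: VbMono; apply: ltnW.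
  apply: (AR2 B0 yr _ _ D0 key (S := Vbar pol PD xD delta t0 Pt r sigma +
                                         Vbar pol PD xD delta t0 Pt r a)).
  - by apply: ltW; apply: ypos; apply: leq_trans tau1 taus.
  - by apply: ymono; rewrite (leq_trans _ r7) //= ltnW.
  - by apply: addr_ge0; apply: ltW.
  - by move: sigsmall hB Vra; clear; lra.
  - by move: h9 h10; rewrite /Del /Delta_hat -/sigma; clear; lra.
have [ht0t hT1t hJ] := J t p hV.
have thK0 : 0 < theta * K%:R by rewrite mulr_gt0 // ltr0n.
have Vp0 : 0 < Vbar pol PD xD delta t0 Pt t p by apply: lt_trans hV.
have t1 : (1 <= t)%N by apply: leq_ltn_trans ht0t.
have pstsmall : Vbar pol PD xD delta t0 Pt t pst <= theta * K%:R.
  rewrite leNgt; apply/negP => h; have [_ _ h6] := J t pst h.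
  move: h6; rewrite subrr; apply/negP; rewrite -ltNge.
  rewrite mulr_gt0 // sqrtr_gt0 mulr_gt0 ?ypos //.
  by apply: lt_le_trans (VbK t pst t1); rewrite ltr0n.
have h := hc2 p pst t (ltnW ht0t).
have h2 := hpit t pst.
have Vpst0 : 0 < Vbar pol PD xD delta t0 Pt t pst.
  by apply: lt_le_trans (VbK t pst t1); rewrite ltr0n.
rewrite -mulrA.
apply: (AR4 Vp0 (ypos t t1) hJ _ _ _ _ (S := Vbar pol PD xD delta t0 Pt t p +
                                           Vbar pol PD xD delta t0 Pt t pst)
          (x := eta_hat xs rs acts ps t (Wdet R pol pst) - eta_hat xs rs acts ps t (Wdet R pol p))).
- by apply: addr_ge0; apply: ltW.
- by move: pstsmall hV; clear; lra.
- by move: h; clear; lra.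
- by rewrite /Delta_hat; move: h2; clear; lra.
Qed.
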